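(* Let $K\ge 2$, let $\boldsymbol{\pi}\in(0,1)^K$ with $\sum_k\pi_k=1$, and let $\mathbf{B}\in(0,1)^{K\times K}$ be symmetric with pairwise distinct rows. Let $p_0\in(0,1)$ and $p_1\in(0,1-p_0)$, and set $\mathbf{B}_0=p_0\mathbf{B}$ and $\mathbf{B}_1=\mathbf{B}_0+p_1\mathbf{B}=(p_0+p_1)\mathbf{B}$. Then $\mathbf{B}\succ\mathbf{B}_1\succ\mathbf{B}_0$, i.e. $\rho_{\mathbf{B}}>\rho_{\mathbf{B}_1}>\rho_{\mathbf{B}_0}$.
   Context: For a symmetric $\mathbf{B}\in(0,1)^{K\times K}$ with $d_+\ge1$ strictly positive and $d_-\ge 0$ strictly negative eigenvalues, let $d=d_++d_-$ and $\mathbf{I}_{d_+d_-}=\mathrm{diag}(\mathbf{I}_{d_+},-\mathbf{I}_{d_-})$. Write $\mathbf{B}=\mathbf{U}\mathbf{S}\mathbf{U}^\top$ where $\mathbf{S}\in\mathbb{R}^{d\times d}$ is the diagonal matrix of nonzero eigenvalues (positive ones first) and $\mathbf{U}\in\mathbb{R}^{K\times d}$ has orthonormal columns, and set $\boldsymbol{\nu}=\mathbf{U}|\mathbf{S}|^{1/2}\in\mathbb{R}^{K\times d}$ with rows $\boldsymbol{\nu}_1,\dots,\boldsymbol{\nu}_K$, so that $\boldsymbol{\nu}_k^\top\mathbf{I}_{d_+d_-}\boldsymbol{\nu}_\ell=\mathbf{B}_{k\ell}$. Given block assignment probabilities $\boldsymbol{\pi}\in(0,1)^K$ summing to one, define $\boldsymbol{\Delta}=\sum_{\ell=1}^K\pi_\ell\boldsymbol{\nu}_\ell\boldsymbol{\nu}_\ell^\top$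 and, for each $k$, $$\boldsymbol{\Sigma}_k=\mathbf{I}_{d_+d_-}\boldsymbol{\Delta}^{-1}\Big[\sum_{\ell=1}^K\pi_\ell\,\mathbf{B}_{k\ell}(1-\mathbf{B}_{k\ell})\,\boldsymbol{\nu}_\ell\boldsymbol{\nu}_\ell^\top\Big]\boldsymbol{\Delta}^{-1}\mathbf{I}_{d_+d_-}.$$ For $t\in(0,1)$ let $\boldsymbol{\Sigma}_{k\ell}(t)=t\boldsymbol{\Sigma}_k+(1-t)\boldsymbol{\Sigma}_\ell$, and define $$C_{k,\ell}(\mathbf{B},\boldsymbol{\pi})=\sup_{t\in(0,1)}\Big[t(1-t)(\boldsymbol{\nu}_k-\boldsymbol{\nu}_\ell)^\top\boldsymbol{\Sigma}_{k\ell}(t)^{-1}(\boldsymbol{\nu}_k-\boldsymbol{\nu}_\ell)\Big],$$ and the (approximate) Chernoff information $\rho_{\mathbf{B}}=\min_{k\neq\ell}C_{k,\ell}(\mathbf{B},\boldsymbol{\pi})$. For two such matrices $\mathbf{B},\mathbf{B}'$ with the same $\boldsymbol{\pi}$, $\mathbf{B}$ is called Chernoff superior to $\mathbf{B}'$, written $\mathbf{B}\succ\mathbf{B}'$, if $\rho_{\mathbf{B}}>\rho_{\mathbf{B}'}$. *)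

(* Defs.v *)
From HB Require Import structures.
From mathcomp Require Import all_boot all_order all_algebra.
From mathcomp Require Import classical_sets boolp reals.
Set Implicit Arguments. Unset Strict Implicit. Unset Printing Implicit Defensive.
Import Order.TTheory GRing.Theory Num.Theory.
Local Open Scope ring_scope.
Local Open Scope classical_set_scope.

(* A spectral decomposition B = U S U^T as in the paper: U (K x d) with
   orthonormal columns, S = diag(s) the nonzero eigenvalues, the d_+ >= 1
   positive ones first, then the d_- negative ones. *)
Record sdecomp (R : realType) (K : nat) (B : 'M[R]_K) := SDecomp {
  dp : nat;
  dm : nat;
  dU : 'M[R]_(K, dp + dm);
  ds : 'rV[R]_(dp + dm);
  dp_gt0 : (0 < dp)%N;
  dU_orth : dU^T *m dU = 1%:M;
  ds_pos : forall i : 'I_(dp + dm), (i < dp)%N -> 0 < ds 0 i;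
  ds_neg : forall i : 'I_(dp + dm), (dp <= i)%N -> ds 0 i < 0;
  dB : B = dU *m diag_mx ds *m dU^T }.

Section Chernoff.
Variables (R : realType) (K : nat) (B : 'M[R]_K) (D : sdecomp B).
Variable (pi : 'I_K -> R).

Local Notation d := (dp D + dm D)%N.

Definition Ipm : 'M[R]_d :=
  diag_mx (\row_(i < d) if (i < dp D)%N then 1 else -1).

Definition nu : 'M[R]_(K, d) :=
  dU D *m diag_mx (\row_(i < d) Num.sqrt `|ds D 0 i|).

Definition nuk (k : 'I_K) : 'rV[R]_d := row k nu.

Definition Delta : 'M[R]_d := \sum_(l < K) pi l *: ((nuk l)^T *m nuk l).

Definition Sigma (k : 'I_K) : 'M[R]_d :=
  Ipm *m invmx Delta *m
  (\sum_(l < K) (pi l * B k l * (1 - B k l)) *: ((nuk l)^T *m nuk l))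
  *m invmx Delta *m Ipm.

Definition Sigma_t (k l : 'I_K) (t : R) : 'M[R]_d :=
  t *: Sigma k + (1 - t) *: Sigma l.

Definition chernoff_obj (k l : 'I_K) (t : R) : R :=
  let x := nuk k - nuk l in
  t * (1 - t) * (x *m invmx (Sigma_t k l t) *m x^T) 0 0.

Definition chernoff_C (k l : 'I_K) : R :=
  sup [set chernoff_obj k l t | t in [set t : R | 0 < t < 1]].

Definition rho : R :=
  inf [set x : R | exists k l : 'I_K, k != l /\ x = chernoff_C k l].

End Chernoff.

(* Main.v *)
Require Import Defs.
From HB Require Import structures.
From mathcomp Require Import all_boot all_order all_algebra.
From mathcomp Require Import classical_sets boolp reals.
From mathcomp Require Import ring lra.
Set Implicit Arguments. Unset Strict Implicit. Unset Printing Implicit Defensive.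
Import Order.TTheory GRing.Theory Num.Theory.
Local Open Scope ring_scope.

Lemma mxdiagl (R : realType) n m (a : 'rV[R]_n) (M : 'M[R]_(n,m)) i j :
  (diag_mx a *m M) i j = a 0 i * M i j.
Proof. by rewrite mul_diag_mx mxE. Qed.
Lemma mxdiagr (R : realType) n m (a : 'rV[R]_m) (M : 'M[R]_(n,m)) i j :
  (M *m diag_mx a) i j = M i j * a 0 j.
Proof. by rewrite mul_mx_diag mxE. Qed.

Lemma diagE (R : realType) n (a : 'rV[R]_n) i j : diag_mx a i j = a 0 i *+ (i == j).
Proof. by rewrite mxE. Qed.

Lemma rowcolE (R : realType) m n p (X : 'M[R]_(m,n)) (Y : 'M[R]_(n,p)) i j :
  (row i X *m col j Y) 0 0 = (X *m Y) i j.
Proof. by rewrite !mxE; apply: eq_bigr => k _; rewrite !mxE. Qed.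

Lemma one_mulE (R : realType) (a : 'M[R]_(1,1)) (c : 'M[R]_(1,1)) :
  (a *m c) 0 0 = a 0 0 * c 0 0.
Proof. by rewrite [LHS]mxE big_ord1. Qed.

Lemma tr11 (R : realType) (a : 'M[R]_(1,1)) : a^T 0 0 = a 0 0.
Proof. by rewrite mxE. Qed.

Lemma trZ (R : realType) m n (a : R) (M : 'M[R]_(m,n)) : (a *: M)^T = a *: M^T.
Proof. by apply/matrixP=> i j; rewrite !mxE. Qed.

Lemma mxBE (R : realType) m n (X Y : 'M[R]_(m,n)) i j : (X - Y) i j = X i j - Y i j.
Proof. by rewrite !mxE. Qed.
Lemma mxDE (R : realType) m n (X Y : 'M[R]_(m,n)) i j : (X + Y) i j = X i j + Y i j.
Proof. by rewrite !mxE. Qed.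
Lemma mxZE (R : realType) m n (c : R) (X : 'M[R]_(m,n)) i j : (c *: X) i j = c * X i j.
Proof. by rewrite !mxE. Qed.

Lemma inv_uniq (R : realType) n (X Y : 'M[R]_n) : X *m Y = 1%:M -> invmx X = Y.
Proof.
move=> h; have [Xu _] := mulmx1_unit h.
by rewrite -[invmx X]mulmx1 -h mulmxA mulVmx // mul1mx.
Qed.

Lemma variational (R : realType) n (M : 'M[R]_n) (a : 'rV[R]_n) :
  M \in unitmx -> M^T = M -> (forall y : 'rV[R]_n, 0 <= (y *m M *m y^T) 0 0) ->
  (forall z : 'rV[R]_n, 2 * (a *m z^T) 0 0 - (z *m M *m z^T) 0 0 <= (a *m invmx M *m a^T) 0 0)
  /\ 2 * (a *m (a *m invmx M)^T) 0 0 - ((a *m invmx M) *m M *m (a *m invmx M)^T) 0 0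
     = (a *m invmx M *m a^T) 0 0.
Proof.
move=> Mu Ms Mp.
have trI : (a *m invmx M)^T = invmx M *m a^T by rewrite trmx_mul trmx_inv Ms.
have e1 : (a *m invmx M) *m M = a by rewrite -mulmxA mulVmx // mulmx1.
split; last first.
  by rewrite e1 trI mulmxA mulr2n mulrDl mul1r addrK.
move=> z; have := Mp (z - a *m invmx M).
rewrite raddfB /= trI mulmxBl !mulmxBr e1 !mulmxA.
rewrite !mulmxBl -(mulmxA z M (invmx M)) mulmxV // mulmx1.
have ez : (z *m a^T) 0 0 = (a *m z^T) 0 0 by rewrite -tr11 trmx_mul trmxK.
rewrite !mxBE ez; lra.
Qed.

Lemma comb (R : realType) n (P X Y Q1 Q2 : 'M[R]_n) (t s : R) :
  t *: (P *m X *m Q1 *m Q2) + s *: (P *m Y *m Q1 *m Q2) = P *m (t *: X + s *: Y) *m Q1 *m Q2.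
Proof. by rewrite mulmxDr !mulmxDl -!scalemxAr -!scalemxAl. Qed.

Definition om (R : realType) K (A : 'M[R]_K) (k l : 'I_K) (t : R) (m : 'I_K) :=
  t * (A k m * (1 - A k m)) + (1 - t) * (A l m * (1 - A l m)).
Definition phi (R : realType) K (A : 'M[R]_K) (pi : 'I_K -> R) (k l : 'I_K) (t : R) (u : 'rV[R]_K) :=
  2 * (\sum_m pi m * (A k m - A l m) * u 0 m) - \sum_m pi m * om A k l t m * (u 0 m) ^+ 2.

Lemma mulmxAAK (R : realType) m n p (X : 'M[R]_(m,n)) (P : 'M[R]_(n,p)) (Q : 'M[R]_(p,n)) :
  P *m Q = 1%:M -> X *m P *m Q = X.
Proof. by move=> h; rewrite -mulmxA h mulmx1. Qed.

Lemma diag_mul (R : realType) n (a b : 'rV[R]_n) :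
  diag_mx a *m diag_mx b = diag_mx (\row_i (a 0 i * b 0 i)).
Proof. by apply/matrixP=> i j; rewrite mxdiagl !diagE mxE mulrnAr. Qed.

Section Gen.
Variables (R : realType) (K : nat) (A : 'M[R]_K) (D : sdecomp A).
Local Notation d := (dp D + dm D)%N.
Definition sq : 'rV[R]_d := \row_(i < d) Num.sqrt `|ds D 0 i|.
Definition Dg : 'M[R]_d := diag_mx sq.

Lemma sq_gt0 i : 0 < sq 0 i.
Proof.
rewrite mxE sqrtr_gt0 normr_gt0.
case: (ltnP i (dp D)) => h.
  by have := ds_pos h; rewrite lt0r => /andP[].
by have := ds_neg h; rewrite lt_neqAle => /andP[].
Qed.

Lemma nuE : nu D = dU D *m Dg. Proof. by []. Qed.

Lemma Dg_Ipm_Dg : Dg *m Ipm D *m Dg = diag_mx (ds D).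
Proof.
apply/matrixP=> i j; rewrite /Dg /Ipm mxdiagr mxdiagl !diagE.
case: (eqVneq i j) => [->|nij]; last by rewrite !mulr0n !mulr0 mul0r.
rewrite !mulr1n -mulrA mulrC -mulrA -expr2 /sq !mxE sqr_sqrtr ?normr_ge0 //.
case: (ltnP j (dp D)) => h.
  by rewrite mul1r ger0_norm // ltW // ds_pos.
by rewrite ltr0_norm ?ds_neg // mulN1r opprK.
Qed.

Lemma Ipm2 : Ipm D *m Ipm D = 1%:M.
Proof.
apply/matrixP=> i j; rewrite /Ipm mxdiagl !diagE !mxE.
case: (eqVneq i j) => [->|nij]; last by rewrite !mulr0n mulr0.
by rewrite !mulr1n; case: ifP; rewrite ?mulN1r ?opprK ?mul1r.
Qed.

Lemma Ipm_tr : (Ipm D)^T = Ipm D. Proof. exact: tr_diag_mx. Qed.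
Lemma Dg_tr : Dg^T = Dg. Proof. exact: tr_diag_mx. Qed.

Lemma nuIpm : nu D *m Ipm D *m (nu D)^T = A.
Proof.
rewrite nuE trmx_mul Dg_tr !mulmxA.
by rewrite -[dU D *m Dg *m Ipm D]mulmxA -[dU D *m _ *m Dg]mulmxA Dg_Ipm_Dg -dB.
Qed.

Lemma nuk_entry k l : (nuk D k *m Ipm D *m (nuk D l)^T) 0 0 = A k l.
Proof.
rewrite /nuk -row_mul tr_row -[in RHS]nuIpm.
by rewrite rowcolE.
Qed.


Lemma zrowE m (z : 'rV[R]_m) (M : 'M[R]_(K, m)) l :
  (z *m (row l M)^T) 0 0 = (z *m M^T) 0 l.
Proof. by rewrite !mxE; apply: eq_bigr => i _; rewrite !mxE. Qed.

Definition Sm (c : 'I_K -> R) : 'M[R]_d :=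
  \sum_(l < K) c l *: ((nuk D l)^T *m nuk D l).

Lemma Sm_bil (c : 'I_K -> R) (x z : 'rV[R]_d) :
  (x *m Sm c *m z^T) 0 0 =
  \sum_l c l * ((x *m (nuk D l)^T) 0 0 * (z *m (nuk D l)^T) 0 0).
Proof.
rewrite /Sm mulmx_sumr mulmx_suml summxE; apply: eq_bigr => l _.
rewrite -scalemxAr -scalemxAl mxE; congr (_ * _).
rewrite mulmxA -[_ *m z^T]mulmxA one_mulE; congr (_ * _).
by rewrite -tr11 trmx_mul trmxK.
Qed.

Lemma Sm_quad (c : 'I_K -> R) (z : 'rV[R]_d) :
  (z *m Sm c *m z^T) 0 0 = \sum_l c l * ((z *m (nu D)^T) 0 l) ^+ 2.
Proof. by rewrite Sm_bil; apply: eq_bigr => l _; rewrite /nuk zrowE expr2. Qed.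

Lemma Sm_tr c : (Sm c)^T = Sm c.
Proof.
rewrite /Sm raddf_sum; apply: eq_bigr => l _.
apply: etrans (trZ (c l) _) _; by rewrite trmx_mul trmxK.
Qed.

Lemma nu_ker (z : 'rV[R]_d) : z *m (nu D)^T = 0 -> z = 0.
Proof.
rewrite nuE trmx_mul Dg_tr => h.
have h2 : z *m Dg = 0.
  by rewrite -[z *m Dg]mulmx1 -(dU_orth D) mulmxA -(mulmxA _ Dg) h mul0mx.
apply/rowP => i; have := congr1 (fun M : 'M[R]_(1,d) => M 0 i) h2.
rewrite /Dg mxdiagr !mxE => /eqP; rewrite mulf_eq0 => /orP[/eqP //|].
by move: (sq_gt0 i); rewrite mxE => /gt_eqF ->.
Qed.

Lemma Sm_unit (c : 'I_K -> R) : (forall l, 0 < c l) -> Sm c \in unitmx.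
Proof.
move=> cpos; rewrite unitmxE unitfE; apply/negP => /det0P [v v0 vS].
have : (v *m Sm c *m v^T) 0 0 = 0 by rewrite vS mul0mx mxE.
rewrite Sm_quad => /eqP; rewrite psumr_eq0 => [/allP hall|l _]; last first.
  by apply: mulr_ge0; [exact: ltW | exact: sqr_ge0].
apply: (negP v0); apply/eqP/nu_ker/rowP => l.
have := hall l (mem_index_enum _); rewrite /= mulf_eq0 gt_eqF //= sqrf_eq0.
by move=> /eqP ->; rewrite mxE.
Qed.


Lemma Sm_lin c1 c2 (t s : R) : t *: Sm c1 + s *: Sm c2 = Sm (fun m => t * c1 m + s * c2 m).
Proof.
rewrite /Sm !scaler_sumr -big_split; apply: eq_bigr => m _.
by rewrite /= !scalerA scalerDl.
Qed.

Lemma Sm_ext c1 c2 : (forall m, c1 m = c2 m) -> Sm c1 = Sm c2.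
Proof. by move=> h; apply: eq_bigr => m _; rewrite h. Qed.

Lemma Sigma_t_eq pi k l t : Sigma_t D pi k l t =
  Ipm D *m invmx (Sm pi) *m Sm (fun m => pi m * om A k l t m) *m invmx (Sm pi) *m Ipm D.
Proof.
rewrite /Sigma_t /Sigma /Delta -/(Sm pi).
rewrite -/(Sm (fun l0 => pi l0 * A k l0 * (1 - A k l0))).
rewrite -/(Sm (fun l0 => pi l0 * A l l0 * (1 - A l l0))).
rewrite comb Sm_lin; congr (_ *m _ *m _ *m _).
by apply: Sm_ext => m; rewrite /om; ring.
Qed.


Lemma phiE pi k l t (z : 'rV[R]_d) :
  2 * ((nuk D k - nuk D l) *m Ipm D *m Sm pi *m z^T) 0 0
  - (z *m Sm (fun m => pi m * om A k l t m) *m z^T) 0 0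
  = phi A pi k l t (z *m (nu D)^T).
Proof.
rewrite Sm_bil Sm_quad /phi; congr (2 * _ - _).
apply: eq_bigr => m _.
rewrite !mulmxBl mxBE !nuk_entry /nuk zrowE.
by rewrite mulrA.
Qed.

Lemma G pi k l t : (forall m, 0 < pi m) -> 0 < t < 1 -> (forall i j, 0 < A i j < 1) ->
  (forall z : 'rV[R]_d, t * (1 - t) * phi A pi k l t (z *m (nu D)^T) <= chernoff_obj D pi k l t)
  /\ exists z : 'rV[R]_d, chernoff_obj D pi k l t = t * (1 - t) * phi A pi k l t (z *m (nu D)^T).
Proof.
move=> hpi /andP[t0 t1] hA.
set w := fun m => pi m * om A k l t m.
have wpos : forall m, 0 < w m.
  move=> m; rewrite /w /om; apply: mulr_gt0 => //.
  have /andP[a0 a1] := hA k m; have /andP[b0 b1] := hA l m.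
  apply: addr_gt0; apply: mulr_gt0; rewrite ?subr_gt0 //; apply: mulr_gt0; by rewrite ?subr_gt0.
have Du := Sm_unit hpi; have Mu := Sm_unit wpos.
have hinv : invmx (Sigma_t D pi k l t) =
   Ipm D *m Sm pi *m invmx (Sm w) *m Sm pi *m Ipm D.
  rewrite Sigma_t_eq; apply: inv_uniq; rewrite !mulmxA.
  rewrite (mulmxAAK _ Ipm2) (mulmxAAK _ (mulVmx Du)) (mulmxAAK _ (mulmxV Mu)).
  by rewrite (mulmxAAK _ (mulVmx Du)) Ipm2.
set x := nuk D k - nuk D l.
set a := x *m Ipm D *m Sm pi.
have hq : chernoff_obj D pi k l t = t * (1 - t) * (a *m invmx (Sm w) *m a^T) 0 0.
  rewrite /chernoff_obj hinv; congr (_ * _).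
  by rewrite /a /x !trmx_mul Sm_tr Ipm_tr !mulmxA.
have Ms : (Sm w)^T = Sm w by exact: Sm_tr.
have Mp : forall y : 'rV[R]_d, 0 <= (y *m Sm w *m y^T) 0 0.
  move=> y; rewrite Sm_quad; apply: sumr_ge0 => m _.
  by apply: mulr_ge0; [exact: ltW | exact: sqr_ge0].
have [vi ve] := variational a Mu Ms Mp.
have tt0 : 0 <= t * (1 - t) by apply: mulr_ge0; rewrite ?subr_ge0 ltW.
split.
  move=> z; rewrite hq -phiE; apply: ler_wpM2l => //; exact: vi.
exists (a *m invmx (Sm w)); rewrite hq -phiE -/x -/a; congr (_ * _).
by rewrite -ve.
Qed.


Lemma ds_neq0 i : ds D 0 i != 0.
Proof.
case: (ltnP i (dp D)) => h; first by rewrite gt_eqF // ds_pos.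
by rewrite lt_eqF // ds_neg.
Qed.

Lemma range1 (z : 'rV[R]_d) : exists v : 'rV[R]_K, z *m (nu D)^T = v *m A.
Proof.
exists (z *m diag_mx (\row_i (sq 0 i / ds D 0 i)) *m (dU D)^T).
have eA := dB D.
transitivity ((z *m diag_mx (\row_i (sq 0 i / ds D 0 i)) *m (dU D)^T) *m (dU D *m diag_mx (ds D) *m (dU D)^T)); last first.
  exact: (congr1 (mulmx _) (esym eA)).
rewrite !mulmxA -[_ *m (dU D)^T *m dU D]mulmxA dU_orth mulmx1.
rewrite -[_ *m diag_mx _ *m diag_mx _]mulmxA diag_mul nuE trmx_mul Dg_tr mulmxA.
congr (_ *m diag_mx _ *m _); apply/rowP => i; rewrite !mxE divfK //.
exact: ds_neq0.
Qed.

Lemma range2 (v : 'rV[R]_K) : exists z : 'rV[R]_d, v *m A = z *m (nu D)^T.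
Proof.
exists (v *m dU D *m Dg *m Ipm D).
have eA := dB D.
transitivity (v *m (dU D *m diag_mx (ds D) *m (dU D)^T)).
  exact: (congr1 (mulmx _) eA).
by rewrite nuE trmx_mul Dg_tr -Dg_Ipm_Dg !mulmxA.
Qed.

End Gen.

Section Scal.
Variables (R : realType) (K : nat).
Implicit Types (A B : 'M[R]_K) (pi : 'I_K -> R).

Lemma phi_sum A pi k l t u : phi A pi k l t u =
  \sum_m pi m * (2 * (A k m - A l m) * u 0 m - om A k l t m * (u 0 m) ^+ 2).
Proof.
rewrite /phi mulr_sumr -sumrB; apply: eq_bigr => m _; ring.
Qed.

Lemma sum_pos (f : 'I_K -> R) m : (forall i, 0 <= f i) -> 0 < f m -> 0 < \sum_i f i.
Proof.
move=> h hm; rewrite (bigD1 m) //=.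
have : 0 <= \sum_(i < K | i != m) f i by apply: sumr_ge0 => i _; exact: h.
set S := \sum_(i < K | i != m) f i; move: hm; set a := f m; lra.
Qed.

Definition mu A (k l m : 'I_K) := Order.min (A k m * (1 - A k m)) (A l m * (1 - A l m)).
Definition bnd A pi (k l : 'I_K) := \sum_m pi m * ((A k m - A l m) ^+ 2 / mu A k l m).

Lemma om_ge_mu A k l t m : 0 < t < 1 -> mu A k l m <= om A k l t m.
Proof.
move=> /andP[t0 t1]; rewrite /om /mu.
have h1 : Order.min (A k m * (1 - A k m)) (A l m * (1 - A l m)) <= A k m * (1 - A k m).
  by rewrite ge_min lexx.
have h2 : Order.min (A k m * (1 - A k m)) (A l m * (1 - A l m)) <= A l m * (1 - A l m).
  by rewrite ge_min lexx orbT.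
move: h1 h2; set a := Order.min _ _; set x := A k m * _; set y := A l m * _.
move=> h1 h2; nra.
Qed.

Lemma mu_gt0 A k l m : (forall i j, 0 < A i j < 1) -> 0 < mu A k l m.
Proof.
move=> hA; rewrite /mu lt_min.
have /andP[a0 a1] := hA k m; have /andP[b0 b1] := hA l m.
by rewrite !mulr_gt0 ?subr_gt0.
Qed.

Lemma phi_le_bnd A pi k l t u : (forall m, 0 < pi m) -> 0 < t < 1 ->
  (forall i j, 0 < A i j < 1) -> phi A pi k l t u <= bnd A pi k l.
Proof.
move=> hpi ht hA; rewrite phi_sum /bnd; apply: ler_sum => m _.
apply: ler_wpM2l; first exact: ltW.
have hm := mu_gt0 k l m hA; have ho := om_ge_mu A k l m ht.
rewrite ler_pdivlMr //.
move: hm ho; set e := A k m - A l m; set v := u 0 m; set a := mu A k l m;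
  set o := om A k l t m => hm ho.
have h1 : 0 <= (a * v - e) ^+ 2 by exact: sqr_ge0.
have h2 : 0 <= (o - a) * v ^+ 2 * a.
  apply: mulr_ge0; last exact: ltW.
  by apply: mulr_ge0; [rewrite subr_ge0 | exact: sqr_ge0].
nra.
Qed.


Lemma phi_cmp B pi k l t (u : 'rV[R]_K) (c1 c2 : R) :
  (forall m, 0 < pi m) -> 0 < t < 1 -> 0 < c1 -> c1 < c2 ->
  c2 / c1 * phi (c1 *: B) pi k l t u <= phi (c2 *: B) pi k l t u.
Proof.
move=> hpi /andP[t0 t1] c10 c12.
rewrite !phi_sum mulr_sumr; apply: ler_sum => m _; rewrite /om !mxZE.
have ec : c2 = c2 / c1 * c1 by rewrite divfK // gt_eqF.
have r1 : 1 < c2 / c1 by rewrite ltr_pdivlMr // mul1r.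
move: r1; set r := c2 / c1 => r1; rewrite ec.
rewrite -subr_ge0.
set bk := B k m; set bl := B l m; set v := u 0 m; set p := pi m.
have -> : p * (2 * (r * c1 * bk - r * c1 * bl) * v -
       (t * (r * c1 * bk * (1 - r * c1 * bk)) +
        (1 - t) * (r * c1 * bl * (1 - r * c1 * bl))) * v ^+ 2) -
  r * (p * (2 * (c1 * bk - c1 * bl) * v -
        (t * (c1 * bk * (1 - c1 * bk)) + (1 - t) * (c1 * bl * (1 - c1 * bl))) *
        v ^+ 2)) = p * v ^+ 2 * r * c1 ^+ 2 * (r - 1) * (t * bk ^+ 2 + (1 - t) * bl ^+ 2).
  by ring.
have hp : 0 < p by exact: hpi.
apply: mulr_ge0; last first.
  by apply: addr_ge0; apply: mulr_ge0; rewrite ?sqr_ge0 ?subr_ge0 // ltW.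
apply: mulr_ge0; last by rewrite subr_ge0 ltW.
apply: mulr_ge0; last exact: sqr_ge0.
apply: mulr_ge0; last by apply: ltW; apply: lt_trans r1.
by apply: mulr_ge0; [exact: ltW | exact: sqr_ge0].
Qed.

End Scal.

Section Obj.
Variables (R : realType) (K : nat) (pi : 'I_K -> R).
Hypothesis hpi : forall m, 0 < pi m.

Lemma obj_bounds (A : 'M[R]_K) (D : sdecomp A) k l t :
  (forall i j, 0 < A i j < 1) -> 0 < t < 1 ->
  0 <= chernoff_obj D pi k l t <= bnd A pi k l.
Proof.
move=> hA ht; have [Gi [z Ge]] := G D k l hpi ht hA.
have h0 := Gi 0; rewrite mul0mx in h0.
have phi0 : phi A pi k l t 0 = 0.
  by rewrite /phi !big1 ?mulr0 ?subr0 // => m _; rewrite mxE ?mulr0 // expr0n mulr0.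
rewrite phi0 mulr0 in h0; rewrite h0 /=.
have hb := phi_le_bnd k l (z *m (nu D)^T) hpi ht hA.
move: ht h0 hb; rewrite Ge; set p := phi _ _ _ _ _ _; set b := bnd _ _ _ _.
move=> /andP[t0 t1] h0 hb.
have s0 : 0 < t * (1 - t) by rewrite mulr_gt0 // subr_gt0.
have s1 : t * (1 - t) <= 1 by nra.
move: s0 s1 h0; set s := t * (1 - t) => s0 s1 h0.
have p0 : 0 <= p by rewrite -(pmulr_rge0 _ s0).
nra.
Qed.


Lemma obj_pos (A : 'M[R]_K) (D : sdecomp A) k l :
  (forall i j, 0 < A i j < 1) -> row k A != row l A ->
  0 < chernoff_obj D pi k l (2^-1).
Proof.
move=> hA hrow.
have ht : 0 < (2^-1 : R) < 1 by apply/andP; split; lra.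
have [m0 hm0] : exists m, A k m != A l m.
  case: (boolP [exists m, A k m != A l m]) => [/existsP //| /existsPn h].
  by move/negP: hrow; case; apply/eqP/rowP => m; rewrite !mxE; apply/eqP; move: (h m); rewrite negbK.
have hom : forall m, 0 < om A k l 2^-1 m.
  by move=> m; apply: (lt_le_trans (mu_gt0 k l m hA)); exact: om_ge_mu.
set E := \sum_m pi m * (A k m - A l m) ^+ 2.
set F := \sum_m pi m * om A k l 2^-1 m * (A k m - A l m) ^+ 2.
have e0 : 0 < (A k m0 - A l m0) ^+ 2.
  by rewrite lt0r sqr_ge0 andbT sqrf_eq0 subr_eq0.
have E0 : 0 < E.
  apply: (@sum_pos R K _ m0) => [i|]; last by rewrite mulr_gt0.
  by rewrite mulr_ge0 ?sqr_ge0 // ltW.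
have F0 : 0 < F.
  apply: (@sum_pos R K _ m0) => [i|]; last by apply: mulr_gt0; [apply: mulr_gt0|].
  by apply: mulr_ge0; [apply: mulr_ge0; apply: ltW | exact: sqr_ge0].
set s := E / F.
have [z hz] := @range2 _ _ _ D (s *: (delta_mx 0 k - delta_mx 0 l)).
have hu : forall m, (z *m (nu D)^T) 0 m = s * (A k m - A l m).
  move=> m; rewrite -hz -scalemxAl mulmxBl -!rowE mxZE mxBE !mxE //.
have [Gi _] := G D k l hpi ht hA.
have := Gi z.
have h1 : \sum_m pi m * (A k m - A l m) * (z *m (nu D)^T) 0 m = s * E.
  by rewrite /E mulr_sumr; apply: eq_bigr => m _; rewrite hu; ring.
have h2 : \sum_m pi m * om A k l 2^-1 m * ((z *m (nu D)^T) 0 m) ^+ 2 = s ^+ 2 * F.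
  by rewrite /F mulr_sumr; apply: eq_bigr => m _; rewrite hu; ring.
rewrite /phi h1 h2.
have -> : 2 * (s * E) - s ^+ 2 * F = E ^+ 2 / F.
  by rewrite /s; field; rewrite gt_eqF.
apply: lt_le_trans.
apply: mulr_gt0; first lra. by rewrite divr_gt0 // exprn_gt0.
Qed.


Lemma obj_cmp (B A1 A2 : 'M[R]_K) (D1 : sdecomp A1) (D2 : sdecomp A2) (c1 c2 : R) k l t :
  0 < c1 -> c1 < c2 -> A1 = c1 *: B -> A2 = c2 *: B ->
  (forall i j, 0 < A1 i j < 1) -> (forall i j, 0 < A2 i j < 1) -> 0 < t < 1 ->
  c2 / c1 * chernoff_obj D1 pi k l t <= chernoff_obj D2 pi k l t.
Proof.
move=> c10 c12 eA1 eA2 hA1 hA2 ht.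
have [_ [z1 e1]] := G D1 k l hpi ht hA1.
have [v hv] := @range1 _ _ _ D1 z1.
have [z2 hz2] := @range2 _ _ _ D2 ((c1 / c2) *: v).
have hu : z2 *m (nu D2)^T = z1 *m (nu D1)^T.
  rewrite -hz2 hv.
  transitivity ((c1 / c2) *: v *m (c2 *: B)); first exact: (congr1 (mulmx _) eA2).
  transitivity (v *m (c1 *: B)); last exact: (congr1 (mulmx _) (esym eA1)).
  rewrite -scalemxAl -scalemxAr scalerA divfK ?scalemxAr // gt_eqF //.
  exact: lt_trans c12.
have [Gi2 _] := G D2 k l hpi ht hA2.
have := Gi2 z2; rewrite hu e1.
apply: le_trans.
have hc := phi_cmp B k l (z1 *m (nu D1)^T) hpi ht c10 c12.
have tt0 : 0 <= t * (1 - t) by case/andP: ht => t0 t1; apply: mulr_ge0; rewrite ?subr_ge0 ltW.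
have e1' : phi A1 pi k l t = phi (c1 *: B) pi k l t by rewrite eA1.
have e2' : phi A2 pi k l t = phi (c2 *: B) pi k l t by rewrite eA2.
rewrite e1' e2' mulrCA; apply: ler_wpM2l => //.
Qed.

End Obj.

Section Rho.
Local Open Scope classical_set_scope.
Variables (R : realType) (K : nat) (pi : 'I_K -> R).
Hypothesis hpi : forall m, 0 < pi m.
Hypothesis hK : (2 <= K)%N.

Lemma halfin : (0 : R) < (2 : R)^-1 < 1. Proof. by apply/andP; split; lra. Qed.

Lemma C_ge (A : 'M[R]_K) (D : sdecomp A) k l t :
  (forall i j, 0 < A i j < 1) -> 0 < t < 1 ->
  chernoff_obj D pi k l t <= chernoff_C D pi k l.
Proof.
move=> hA ht; apply: ub_le_sup; last by exists t.
exists (bnd A pi k l) => y [s hs <-].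
by have /andP[_ ->] := obj_bounds hpi D k l hA hs.
Qed.

Lemma C_pos (A : 'M[R]_K) (D : sdecomp A) k l :
  (forall i j, 0 < A i j < 1) -> row k A != row l A -> 0 < chernoff_C D pi k l.
Proof.
move=> hA hr; apply: (lt_le_trans (obj_pos hpi D hA hr)); exact: C_ge halfin.
Qed.

Lemma C_cmp (B A1 A2 : 'M[R]_K) (D1 : sdecomp A1) (D2 : sdecomp A2) (c1 c2 : R) k l :
  0 < c1 -> c1 < c2 -> A1 = c1 *: B -> A2 = c2 *: B ->
  (forall i j, 0 < A1 i j < 1) -> (forall i j, 0 < A2 i j < 1) ->
  c2 / c1 * chernoff_C D1 pi k l <= chernoff_C D2 pi k l.
Proof.
move=> c10 c12 e1 e2 h1 h2.
have r0 : 0 < c2 / c1 by rewrite divr_gt0 // (lt_trans c10).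
rewrite mulrC -ler_pdivlMr //.
apply: ge_sup; first by exists (chernoff_obj D1 pi k l 2^-1), 2^-1 => //; exact: halfin.
move=> y [t ht <-]; rewrite ler_pdivlMr // mulrC.
apply: (le_trans (obj_cmp hpi D1 D2 k l c10 c12 e1 e2 h1 h2 ht)).
exact: C_ge.
Qed.

Definition Tset (A : 'M[R]_K) (D : sdecomp A) :=
  [set x | exists k l : 'I_K, k != l /\ x = chernoff_C D pi k l].

Lemma T_ne (A : 'M[R]_K) (D : sdecomp A) : exists x, Tset D x.
Proof.
have h0 : (0 < K)%N by apply: leq_trans hK.
exists (chernoff_C D pi (Ordinal h0) (Ordinal hK)).
by exists (Ordinal h0), (Ordinal hK); split.
Qed.

Lemma rho_props (A : 'M[R]_K) (D : sdecomp A) :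
  (forall i j, 0 < A i j < 1) -> (forall k l : 'I_K, k != l -> row k A != row l A) ->
  0 < rho D pi /\ forall k l, k != l -> rho D pi <= chernoff_C D pi k l.
Proof.
move=> hA hr.
set m := \big[Order.min/1]_(p : 'I_K * 'I_K | p.1 != p.2) chernoff_C D pi p.1 p.2.
have m0 : 0 < m.
  apply: (big_ind (fun x => 0 < x)) => //.
    by move=> x y hx hy; rewrite lt_min hx hy.
  by move=> [k l] /= kl; apply: C_pos => //; exact: hr.
have mlb : lbound (Tset D) m.
  move=> y [k [l [kl ->]]].
  exact: (@bigmin_le_cond _ _ _ 1 (k, l) (fun p : 'I_K * 'I_K => p.1 != p.2)).
split; first exact: (lt_le_trans m0 (lb_le_inf (T_ne D) mlb)).
move=> k l kl; apply: ge_inf; first by exists m.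
by exists k, l.
Qed.

Lemma rho_cmp (B A1 A2 : 'M[R]_K) (D1 : sdecomp A1) (D2 : sdecomp A2) (c1 c2 : R) :
  0 < c1 -> c1 < c2 -> A1 = c1 *: B -> A2 = c2 *: B ->
  (forall i j, 0 < A1 i j < 1) -> (forall i j, 0 < A2 i j < 1) ->
  (forall k l : 'I_K, k != l -> row k A1 != row l A1) ->
  rho D1 pi < rho D2 pi.
Proof.
move=> c10 c12 e1 e2 h1 h2 hr.
have [rp rlb] := rho_props D1 h1 hr.
have r1 : 1 < c2 / c1 by rewrite ltr_pdivlMr // mul1r.
apply: (@lt_le_trans _ _ (c2 / c1 * rho D1 pi)).
  by rewrite -subr_gt0 -{2}(mul1r (rho D1 pi)) -mulrBl mulr_gt0 // subr_gt0.
apply: lb_le_inf; first exact: T_ne.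
move=> y [k [l [kl ->]]].
apply: le_trans (C_cmp D1 D2 k l c10 c12 e1 e2 h1 h2).
by rewrite ler_wpM2l // ?rlb // ltW // (lt_trans _ r1).
Qed.

End Rho.

Theorem corollary1 (R : realType) (K : nat) (hK : (2 <= K)%N)
  (pi : 'I_K -> R)
  (hpi : forall k, 0 < pi k < 1) (hpisum : \sum_(k < K) pi k = 1)
  (B : 'M[R]_K)
  (hB : forall k l, 0 < B k l < 1) (hBsym : B^T = B)
  (hBrows : forall k l : 'I_K, k != l -> row k B != row l B)
  (p0 p1 : R) (hp0 : 0 < p0 < 1) (hp1 : 0 < p1 < 1 - p0)
  (D : sdecomp B) (D1 : sdecomp ((p0 + p1) *: B)) (D0 : sdecomp (p0 *: B)) :
  rho D1 pi < rho D pi /\ rho D0 pi < rho D1 pi.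
Proof.
have hpi' : forall m, 0 < pi m by move=> m; case/andP: (hpi m).
have rowsc : forall c : R, 0 < c -> forall k l : 'I_K, k != l -> row k (c *: B) != row l (c *: B).
  move=> c c0 k l kl; apply: contra (hBrows k l kl) => /eqP h; apply/eqP/rowP => j.
  have := congr1 (fun M : 'rV[R]_K => M 0 j) h; rewrite !mxE => /mulfI; apply.
  by rewrite gt_eqF.
have entsc : forall c : R, 0 < c -> c <= 1 -> forall i j, 0 < (c *: B) i j < 1.
  move=> c c0 c1 i j; rewrite mxE; case/andP: (hB i j) => b0 b1.
  by apply/andP; split; [rewrite mulr_gt0 | nra].
case/andP: hp0 => a0 a1; case/andP: hp1 => b0 b1.
split.
  apply: (rho_cmp hpi' hK D1 D (c1 := p0 + p1) (c2 := 1) (B := B)) => //.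
  - by rewrite addr_gt0.
  - by lra.
  - by rewrite scale1r.
  - by apply: entsc; [rewrite addr_gt0 | lra].
  - by apply: rowsc; rewrite addr_gt0.
apply: (rho_cmp hpi' hK D0 D1 (c1 := p0) (c2 := p0 + p1) (B := B)) => //.
- by lra.
- by apply: entsc => //; lra.
- by apply: entsc; [rewrite addr_gt0 | lra].
- exact: rowsc.
Qed.
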